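(* Let $n\ge2$, let $P_1$ be the probability that a given node is isolated in $H^*_{nmF}$ and $P_2$ the probability that two given distinct nodes are both isolated in $H^*_{nmF}$. For each $k$ let $X_k$ be $f^{(k)}$-distributed and let $\phi_1(x)=1-\frac{x1(x\ge2)}{n}$. Assume $\mathbb{E}\phi_1(X_k)>0$ for all $k$. Then \[ \log\frac{P_2}{P_1^2}\ \le\ \sum_{k=1}^m\frac{\operatorname{Var}(\phi_1(X_k))}{(\mathbb{E}\phi_1(X_k))^2}. \]
   Context: Shotgun random hypergraph: given integers $n,m\ge1$ and probability distributions $f^{(1)},\dots,f^{(m)}$ on $\{0,\dots,n\}$, write $F=f^{(1)}\times\cdots\times f^{(m)}$. $H^*_{nmF}$ is the random hypergraph with node set $\{1,\dots,n\}$ and hyperedge set $\{V_1,\dots,V_m\}$, where $V_1,\dots,V_m\subset\{1,\dots,n\}$ are mutually independent and $\mathbb{P}(V_k=A)=f^{(k)}(|A|)\binom{n}{|A|}^{-1}$. A node is isolated if it is not contained in any hyperedge of size at least two. *)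

(* Defs.v *)
From HB Require Import structures.
From mathcomp Require Import all_boot all_order all_algebra.
From mathcomp Require Import reals exp.
Set Implicit Arguments. Unset Strict Implicit. Unset Printing Implicit Defensive.
Import Order.TTheory GRing.Theory Num.Theory.
Local Open Scope ring_scope.

Section Shotgun.
Variables (R : realType) (n m : nat) (f : 'I_m -> 'I_n.+1 -> R).

(* An outcome of the shotgun hypergraph: the hyperedges V_1..V_m (indexed by 'I_m)
   over the node set 'I_n. *)
Definition hyperedges := {ffun 'I_m -> {set 'I_n}}.

(* P(V_1,...,V_m) = prod_k f^(k)(|V_k|) / binom(n, |V_k|)   (independence) *)
Definition shotgun_weight (V : hyperedges) : R :=
  \prod_(k < m) (f k (inord #|V k|) / ('C(n, #|V k|))%:R).

Definition shotgun_prob (E : pred hyperedges) : R :=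
  \sum_(V : hyperedges | E V) shotgun_weight V.

Definition isolated (V : hyperedges) (i : 'I_n) : bool :=
  [forall k, (i \in V k) ==> (#|V k| < 2)%N].

Definition phi1 (x : nat) : R := 1 - (if (2 <= x)%N then x%:R else 0) / n%:R.

Definition Ephi1 (k : 'I_m) : R := \sum_(s < n.+1) f k s * phi1 s.
Definition Varphi1 (k : 'I_m) : R :=
  \sum_(s < n.+1) f k s * (phi1 s - Ephi1 k) ^+ 2.

End Shotgun.

Definition is_distribution (R : realType) (n : nat) (g : 'I_n.+1 -> R) : Prop :=
  (forall s, 0 <= g s) /\ \sum_(s < n.+1) g s = 1.

(* Main.v *)
Require Import Defs.
From HB Require Import structures.
From mathcomp Require Import all_boot all_order all_algebra.
From mathcomp Require Import reals exp.
From mathcomp Require Import sequences ring lra zify.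
Import Order.TTheory GRing.Theory Num.Theory.
Local Open Scope ring_scope.

Lemma natineq N s a1 a2 b : (2 <= s)%N -> (s <= N)%N -> (N * a1 = (N-s)*b)%N -> (N.-1 * a2 = (N.-1-s)*a1)%N -> (N*N*a2 <= (N-s)*(N-s)*b)%N.
Proof.
move=> hs hsN H1 H2.
have hN : (0 < N.-1)%N by lia.
rewrite -(leq_pmul2r hN).
have -> : (N*N*a2*N.-1 = N*(N.-1-s)*(N*a1))%N by rewrite -[(N*N*a2*N.-1)%N]mulnA [(a2*_)%N]mulnC H2; ring.
rewrite H1.
have h3 : (N*(N.-1-s) <= N.-1*(N-s))%N.
  have [e|lt] := eqVneq s N. by subst; rewrite subnn /= muln0; lia.
  have -> : (N.-1 - s = (N-s).-1)%N by lia.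
  set t := (N - s)%N. have : (t <= N)%N by lia. have : (0 < t)%N by lia.
  case: t => // t _ /= ht. clear -ht; case: N ht => // N ht /=. nia.
have h := leq_mul h3 (leqnn ((N-s)*b)%N). apply: leq_trans; first by rewrite !mulnA in h *; exact: h.
by rewrite [in X in (_ <= X)%N]mulnC !mulnA.
Qed.

Lemma subC1E (T : finType) (S : {set T}) (i : T) : (S \subset [set~ i]) = (i \notin S).
Proof.
apply/subsetP/idP => [H|H x xS].
  by apply/negP => /H; rewrite !inE eqxx.
by rewrite !inE; apply/eqP => e; subst; rewrite xS in H.
Qed.

Lemma subC2E (T : finType) (S : {set T}) (i j : T) :
  (S \subset ~: [set i; j]) = (i \notin S) && (j \notin S).
Proof.
apply/subsetP/andP => [H|[Hi Hj] x xS].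
  by split; apply/negP => /H; rewrite !inE eqxx ?orbT.
by rewrite !inE negb_or; apply/andP; split; apply/eqP => e; subst; rewrite xS in Hi Hj.
Qed.

Lemma ratio_le (R : realType) (n s a2 b : nat) : (0 < n)%N -> (0 < b)%N -> (s <= n)%N ->
  (n*n*a2 <= (n-s)*(n-s)*b)%N ->
  (a2%:R / b%:R : R) <= (1 - s%:R / n%:R) ^+ 2.
Proof.
move=> hn hb hs H.
have n0 : (n%:R : R) != 0 by rewrite pnatr_eq0 -lt0n.
have e : (1 - s%:R / n%:R : R) = (n-s)%:R / n%:R.
  by rewrite natrB // mulrBl divff.
rewrite e expr_div_n ler_pdivrMr ?ltr0n // mulrAC ler_pdivlMr ?exprn_gt0 ?ltr0n //.
by rewrite -!natrX -!natrM ler_nat !expnS !expn0 !muln1 mulnC.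
Qed.

Section Helpers.
Variables (R : realType) (n m : nat) (f : 'I_m -> 'I_n.+1 -> R).
Hypothesis Hf : forall k, is_distribution (f k).

Definition wt (k : 'I_m) (t : nat) : R := f k (inord t) / ('C(n, t))%:R.

Lemma prod_event (ok : 'I_m -> {set 'I_n} -> bool) :
  shotgun_prob f (fun V => [forall k, ok k (V k)]) =
  \prod_(k < m) \sum_(S : {set 'I_n}) (if ok k S then wt k #|S| else 0).
Proof.
rewrite bigA_distr_bigA /shotgun_prob big_mkcond /=.
apply: eq_bigr => V _.
case: (boolP [forall k, ok k (V k)]) => [/forallP H|/forallPn [k Hk]].
  by apply: eq_bigr => k _; rewrite H.
rewrite (bigD1 k) //= (negbTE Hk) mul0r //.
Qed.

Lemma sum_by_card (g : {set 'I_n} -> R) :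
  \sum_(S : {set 'I_n}) g S = \sum_(s < n.+1) \sum_(S : {set 'I_n} | #|S| == s) g S.
Proof.
rewrite (partition_big (fun S : {set 'I_n} => (inord #|S| : 'I_n.+1)) xpredT) //.
apply: eq_bigr => s _; apply: eq_bigl => S; rewrite /=.
have hS : (#|S| < n.+1)%N by have := max_card (mem S); rewrite card_ord.
by rewrite -val_eqE /= inordK.
Qed.

Lemma count_term k (ok : {set 'I_n} -> bool) (s : nat) :
  \sum_(S : {set 'I_n} | #|S| == s) (if ok S then wt k #|S| else 0) =
  wt k s *+ #|[set S : {set 'I_n} | (#|S| == s) && ok S]|.
Proof.
rewrite -big_mkcondr -sumr_const.
apply: eq_big => [S|S /andP[/eqP -> _]] //; by rewrite inE.
Qed.


Definition ok1 (i : 'I_n) (S : {set 'I_n}) := (i \in S) ==> (#|S| < 2)%N.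

Lemma bin_ne0 (s : 'I_n.+1) : (('C(n, s))%:R : R) != 0.
Proof. by rewrite pnatr_eq0 -lt0n bin_gt0 -ltnS ltn_ord. Qed.

Lemma small_case k (s : 'I_n.+1) (ok : {set 'I_n} -> bool) :
  (s < 2)%N -> (forall S : {set 'I_n}, #|S| = s -> ok S) ->
  wt k s *+ #|[set S : {set 'I_n} | (#|S| == s) && ok S]| = f k s.
Proof.
move=> hs hok.
have -> : [set S : {set 'I_n} | (#|S| == s) && ok S] = [set S : {set 'I_n} | #|S| == s].
  apply/setP => S; rewrite !inE; case: eqP => //= /hok ->; done.
by rewrite card_draws card_ord /wt inord_val -[_ *+ _]mulr_natr divfK // bin_ne0.
Qed.

Lemma p_eq k (i : 'I_n) : (0 < n)%N ->
  \sum_(S : {set 'I_n}) (if ok1 i S then wt k #|S| else 0) = Ephi1 f k.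
Proof.
move=> hn; rewrite sum_by_card /Ephi1; apply: eq_bigr => s _; rewrite count_term.
case: (ltnP s 2) => hs.
  rewrite small_case //; last by move=> S e; rewrite /ok1 e hs implybT.
  by rewrite /phi1 leqNgt hs /= mul0r subr0 mulr1.
have -> : [set S : {set 'I_n} | (#|S| == s) && ok1 i S] =
          [set S : {set 'I_n} | S \subset [set~ i] & #|S| == s].
  apply/setP => S; rewrite !inE subC1E /ok1; case: eqP => [->|_]; last by rewrite andbF.
  by rewrite ltnNge hs /= implybF andbT.
rewrite cards_draws cardsC1 card_ord /wt /phi1 hs inord_val.
have n0 : (n%:R : R) != 0 by rewrite pnatr_eq0 -lt0n.
have H := mul_bin_down n s.
have hsn : (s <= n)%N by rewrite -ltnS ltn_ord.
have e : ('C(n.-1, s)%:R : R) = (n - s)%:R * 'C(n, s)%:R / n%:R.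
  by rewrite -natrM -H natrM mulrAC divff // mul1r.
rewrite -[_ *+ _]mulr_natr e natrB //.
have := bin_ne0 s; move: ('C(n, s)%:R : R) => c c0.
by field; apply/andP.
Qed.

Lemma q_le k (i j : 'I_n) : (2 <= n)%N -> i != j ->
  \sum_(S : {set 'I_n}) (if ok1 i S && ok1 j S then wt k #|S| else 0) <=
  \sum_(s < n.+1) f k s * phi1 R n s ^+ 2.
Proof.
move=> hn ij; rewrite sum_by_card; apply: ler_sum => s _; rewrite count_term.
case: (ltnP s 2) => hs.
  rewrite small_case //; last by move=> S e; rewrite /ok1 e hs !implybT.
  by rewrite /phi1 leqNgt hs /= mul0r subr0 expr1n mulr1.
have -> : [set S : {set 'I_n} | (#|S| == s) && (ok1 i S && ok1 j S)] =
          [set S : {set 'I_n} | S \subset ~: [set i; j] & #|S| == s].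
  apply/setP => S; rewrite !inE subC2E /ok1; case: eqP => [->|_]; last by rewrite andbF.
  by rewrite ltnNge hs /= !implybF andbT.
have hC : #|~: [set i; j]| = n.-2.
  by have := cardsC [set i; j]; rewrite cards2 ij card_ord; lia.
rewrite cards_draws hC /wt /phi1 hs inord_val -[_ *+ _]mulr_natr -mulrA.
have hsn : (s <= n)%N by rewrite -ltnS ltn_ord.
apply: ler_wpM2l; first by case: (Hf k) => h _; exact: h.
rewrite mulrC; apply: ratio_le => //; first by lia.
  by rewrite bin_gt0.
apply: (@natineq n s 'C(n.-1, s)) => //; first exact: mul_bin_down.
exact: mul_bin_down.
Qed.

End Helpers.
Arguments ok1 {n}.
Arguments wt {R n m}.

Theorem mainTheorem11 (R : realType) (n m : nat) (f : 'I_m -> 'I_n.+1 -> R)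
  (i j : 'I_n) :
  (2 <= n)%N -> (1 <= m)%N ->
  (forall k, is_distribution (f k)) ->
  i != j ->
  (forall k, 0 < Ephi1 f k) ->
  let P1 := shotgun_prob f (fun V => isolated V i) in
  let P2 := shotgun_prob f (fun V => isolated V i && isolated V j) in
  P2 = 0 \/
  ln (P2 / P1 ^+ 2) <= \sum_(k < m) Varphi1 f k / (Ephi1 f k) ^+ 2.
Proof.
move=> hn hm Hf ij Hpos P1 P2.
have hn0 : (0 < n)%N by lia.
have eP1 : P1 = \prod_(k < m) Ephi1 f k.
  transitivity (shotgun_prob f (fun V => [forall k, ok1 i (V k)])); first by [].
  rewrite (@prod_event _ _ _ f (fun _ S => ok1 i S)); apply: eq_bigr => k _; exact: p_eq.
pose q k := \sum_(S : {set 'I_n}) (if ok1 i S && ok1 j S then wt f k #|S| else 0).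
have eP2 : P2 = \prod_(k < m) q k.
  transitivity (shotgun_prob f (fun V => [forall k, ok1 i (V k) && ok1 j (V k)])).
    rewrite /P2 /shotgun_prob; apply: eq_bigl => V; rewrite /isolated.
    apply/idP/idP => [/andP[/forallP a /forallP b]|/forallP a].
      by apply/forallP => k; rewrite /ok1 a b.
    by apply/andP; split; apply/forallP => k; have /andP[] := a k.
  by rewrite (@prod_event _ _ _ f (fun _ S => ok1 i S && ok1 j S)).
have q_ge0 k : 0 <= q k.
  apply: sumr_ge0 => S _; case: ifP => // _.
  by apply: divr_ge0; [case: (Hf k) => h _; exact: h | exact: ler0n].
have eV k : \sum_(s < n.+1) f k s * phi1 R n s ^+ 2 = Varphi1 f k + Ephi1 f k ^+ 2.
  have -> : Varphi1 f k = \sum_(s < n.+1) (f k s * phi1 R n s ^+ 2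
     - (Ephi1 f k *+ 2) * (f k s * phi1 R n s) + Ephi1 f k ^+ 2 * f k s).
    by apply: eq_bigr => s _; ring.
  rewrite big_split sumrB /= -!mulr_sumr -/(Ephi1 f k).
  case: (Hf k) => _ ->; ring.
case: (eqVneq P2 0) => [->|P2ne0]; [by left | right].
have P1pos : 0 < P1 by rewrite eP1 prodr_gt0.
have P2pos : 0 < P2 by rewrite lt_def P2ne0 eP2 prodr_ge0.
apply: (@le_trans _ _ (ln (expR (\sum_(k < m) Varphi1 f k / Ephi1 f k ^+ 2)))); last by rewrite expRK.
rewrite ler_ln ?posrE ?expR_gt0 ?divr_gt0 ?exprn_gt0 //.
rewrite expR_sum eP1 eP2 -prodrXl -prodf_div; apply: ler_prod => k _; apply/andP; split.
  by apply: divr_ge0; [exact: q_ge0 | exact: sqr_ge0].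
have E2 : 0 < Ephi1 f k ^+ 2 by rewrite exprn_gt0.
apply: (@le_trans _ _ ((Varphi1 f k + Ephi1 f k ^+ 2) / Ephi1 f k ^+ 2)).
  rewrite ler_pM2r ?invr_gt0 // -eV; exact: q_le.
rewrite mulrDl divff ?gt_eqF // addrC; exact: expR_ge1Dx.
Qed.
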